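(* Let $P^1,\dots,P^m\in\Delta^n$ be in general position, and let $L_0=L(P^1,\dots,P^m)$. Let $\Psi'$ be the $(m-1)\times(n-1)$ matrix with entries $\Psi'_{i,j}=P^{i+1}_{j+1}-P^1_{j+1}$ ($i=1,\dots,m-1$, $j=1,\dots,n-1$), and let $\boldsymbol b=(H(P^1)-H(P^2),\dots,H(P^1)-H(P^m))\in\mathbb{R}^{m-1}$, where $H(P)=-\sum_j P_j\log P_j$. Let $\boldsymbol\theta=(\theta_2,\dots,\theta_n)$ be any solution of $\Psi'\,{}^t\boldsymbol\theta={}^t\boldsymbol b$, and define $Q\in\Delta^n$ by $Q_1=(1+\sum_{j=2}^n e^{\theta_j})^{-1}$ and $Q_j=Q_1e^{\theta_j}$ for $j=2,\dots,n$. Put $Q^0=\pi(Q|L_0)$. Then $Q^0$ is the unique point in $L_0$ satisfying $D(P^i\|Q^0)=D(P^1\|Q^0)$ for $i=2,\dots,m$.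
   Context: $\Delta^n=\{Q=(Q_1,\dots,Q_n):Q_j>0,\ \sum_jQ_j=1\}$. $D(Q\|Q')=\sum_jQ_j\log(Q_j/Q'_j)$. Points $P^1,\dots,P^m\in\Delta^n$ are in general position if $P^2-P^1,\dots,P^m-P^1$ are linearly independent. $L(P^1,\dots,P^m)=\{\sum_i\lambda_iP^i:\sum_i\lambda_i=1\}\cap\Delta^n$. For $Q'\in\Delta^n$ and such an affine subspace $L$, $\pi(Q'|L)$ denotes the unique $Q\in L$ minimizing $D(Q\|Q')$. *)

(* Defs.v *)
From HB Require Import structures.
From mathcomp Require Import all_boot all_order all_algebra.
From mathcomp Require Import all_classical all_reals.
From mathcomp Require Import sequences exp.
Set Implicit Arguments. Unset Strict Implicit. Unset Printing Implicit Defensive.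
Import Order.TTheory GRing.Theory Num.Theory.
Local Open Scope ring_scope.

Section Defs.
Variable R : realType.

(* Points of R^n are functions 'I_n -> R (coordinate j+1 of the paper = index j). *)

Definition simplex (n : nat) (Q : 'I_n -> R) : Prop :=
  (forall j, 0 < Q j) /\ \sum_j Q j = 1.

Definition KL (n : nat) (Q Q' : 'I_n -> R) : R :=
  \sum_j Q j * ln (Q j / Q' j).

Definition entropy (n : nat) (P : 'I_n -> R) : R :=
  - \sum_j P j * ln (P j).

Definition general_position (m n : nat) (P : 'I_m.+1 -> 'I_n -> R) : bool :=
  row_free (\matrix_(i < m, j < n) (P (lift ord0 i) j - P ord0 j)).

Definition affL (m n : nat) (P : 'I_m -> 'I_n -> R) (Q : 'I_n -> R) : Prop :=
  (exists lam : 'I_m -> R, \sum_i lam i = 1 /\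
       forall j, Q j = \sum_i lam i * P i j) /\ simplex Q.

Definition is_Iproj (n : nat) (L : ('I_n -> R) -> Prop) (Q' Q0 : 'I_n -> R) : Prop :=
  L Q0 /\ forall Q, L Q -> KL Q0 Q' <= KL Q Q'.

Definition Psi' (m n : nat) (P : 'I_m.+1 -> 'I_n.+1 -> R) : 'M[R]_(m, n) :=
  \matrix_(i < m, j < n) (P (lift ord0 i) (lift ord0 j) - P ord0 (lift ord0 j)).

Definition bvec (m n : nat) (P : 'I_m.+1 -> 'I_n.+1 -> R) : 'cV[R]_m :=
  \col_(i < m) (entropy (P ord0) - entropy (P (lift ord0 i))).

Definition Q1theta (n : nat) (theta : 'cV[R]_n) : R :=
  (1 + \sum_(j < n) expR (theta j ord0))^-1.

Definition Qtheta (n : nat) (theta : 'cV[R]_n) : 'I_n.+1 -> R :=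
  fun k => match unlift ord0 k with
           | Some j => Q1theta theta * expR (theta j ord0)
           | None => Q1theta theta
           end.

End Defs.

(* Main.v *)
Require Import Defs.
From HB Require Import structures.
From mathcomp Require Import all_boot all_order all_algebra.
From mathcomp Require Import all_classical all_reals.
From mathcomp Require Import sequences exp.
From mathcomp Require Import topology normedtype derive realfun.
From mathcomp Require Import ring lra.
Import Order.TTheory GRing.Theory Num.Theory.
Import numFieldNormedType.Exports.
Local Open Scope ring_scope.
Set Implicit Arguments. Unset Strict Implicit. Unset Printing Implicit Defensive.


Section Alg.
Variables (R : realType) (N : nat).
Implicit Types (a X Y Z : 'I_N -> R).

Lemma KL_split a X : (forall j, 0 < a j) -> (forall j, 0 < X j) ->
  KL a X = \sum_j a j * ln (a j) - \sum_j a j * ln (X j).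
Proof.
move=> ha hX; rewrite /KL -sumrB; apply: eq_bigr => j _.
by rewrite ln_div ?posrE // mulrBr.
Qed.

Lemma KL_term (x y : R) : 0 < x -> 0 < y ->
  (Num.sqrt x - Num.sqrt y) ^+ 2 + (x - y) <= x * ln (x / y).
Proof.
move=> x0 y0.
set s := Num.sqrt x; set t := Num.sqrt y.
have s0 : 0 < s by rewrite sqrtr_gt0.
have t0 : 0 < t by rewrite sqrtr_gt0.
have xs : x = s ^+ 2 by rewrite sqr_sqrtr // ltW.
have yt : y = t ^+ 2 by rewrite sqr_sqrtr // ltW.
rewrite xs yt.
have -> : s ^+ 2 / t ^+ 2 = (t / s) ^-1 ^+ 2 by rewrite invf_div expr_div_n.
rewrite lnXn ?posrE ?invr_gt0 ?divr_gt0 // lnV ?posrE ?divr_gt0 //.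
have h : ln (t / s) <= t / s - 1.
  have := @le_ln1Dx R (t / s - 1); rewrite addrCA subrr addr0; apply.
  have : 0 < t / s by rewrite divr_gt0.
  lra.
have h2 : s ^+ 2 * ln (t / s) <= s ^+ 2 * (t / s - 1).
  by rewrite ler_pM2l ?exprn_gt0.
have e2 : s ^+ 2 * (t / s - 1) = s * t - s ^+ 2.
  by field; rewrite gt_eqF.
rewrite e2 in h2.
have e : s ^+ 2 * (- ln (t / s) *+ 2) = - (s ^+ 2 * ln (t / s)) * 2.
  by rewrite mulr_natr; ring.
rewrite e.
move: h2; set L := s ^+ 2 * ln (t / s).
rewrite sqrrB. nra.
Qed.

Lemma KL_sq a X : simplex a -> simplex X ->
  \sum_j (Num.sqrt (a j) - Num.sqrt (X j)) ^+ 2 <= KL a X.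
Proof.
case=> ha sa [hX sX].
have hs : \sum_j ((Num.sqrt (a j) - Num.sqrt (X j)) ^+ 2 + (a j - X j)) <= KL a X.
  by apply: ler_sum => j _; apply: KL_term.
by rewrite big_split /= sumrB sa sX subrr addr0 in hs.
Qed.

Lemma KL_ge0 a X : simplex a -> simplex X -> 0 <= KL a X.
Proof.
move=> sa sX; apply: le_trans (KL_sq sa sX).
by apply: sumr_ge0 => j _; apply: sqr_ge0.
Qed.

Lemma gibbs a X : simplex a -> simplex X -> KL a X <= 0 -> a = X.
Proof.
move=> sa' sX' hk; have hs := KL_sq sa' sX'.
case: sa' sX' => ha sa [hX sX].
have h0 : \sum_j (Num.sqrt (a j) - Num.sqrt (X j)) ^+ 2 = 0.
  apply/eqP; rewrite eq_le (le_trans hs hk) /=.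
  by apply: sumr_ge0 => j _; apply: sqr_ge0.
apply: funext => j.
have : (Num.sqrt (a j) - Num.sqrt (X j)) ^+ 2 = 0.
  by apply: (psumr_eq0P _ h0) => // i _; exact: sqr_ge0.
move/eqP; rewrite sqrf_eq0 subr_eq0 => /eqP e.
by rewrite -(sqr_sqrtr (ltW (ha j))) e sqr_sqrtr // ltW.
Qed.

Lemma KL_self a : (forall j, 0 < a j) -> KL a a = 0.
Proof.
move=> ha; rewrite /KL big1 // => j _.
by rewrite divff ?gt_eqF // ln1 mulr0.
Qed.

End Alg.

Section Main.
Variables (R : realType) (N m : nat) (P : 'I_m.+1 -> 'I_N -> R) (Q : 'I_N -> R).
Hypothesis hQ : forall j, 0 < Q j.
Hypothesis hP : forall i, simplex (P i).

Definition good (X : 'I_N -> R) : Prop := affL P X /\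
  forall i, \sum_j (P i j - P ord0 j) * (ln (X j) - ln (Q j)) = 0.

Lemma affL_lin X (w : 'I_N -> R) : affL P X ->
  (forall i, \sum_j P i j * w j = \sum_j P ord0 j * w j) ->
  \sum_j X j * w j = \sum_j P ord0 j * w j.
Proof.
move=> [[lam [s1 hX]] _] hw.
rewrite (eq_bigr (fun j => \sum_i lam i * (P i j * w j))); last first.
  by move=> j _; rewrite hX mulr_suml; apply: eq_bigr => i _; rewrite mulrA.
rewrite exchange_big /=.
rewrite (eq_bigr (fun i => lam i * \sum_j P ord0 j * w j)); last first.
  by move=> i _; rewrite -mulr_sumr hw.
by rewrite -mulr_suml s1 mul1r.
Qed.

Lemma good_lin X Y : good X -> affL P Y ->
  \sum_j Y j * (ln (X j) - ln (Q j)) = \sum_j P ord0 j * (ln (X j) - ln (Q j)).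
Proof.
move=> [aX gX] aY; apply: affL_lin => // i.
move: (gX i); under eq_bigr do rewrite mulrBl.
by rewrite sumrB => /eqP; rewrite subr_eq0 => /eqP.
Qed.

Lemma pythag X Y : good X -> affL P Y -> KL Y Q = KL Y X + KL X Q.
Proof.
move=> gX aY.
have [[_ [pX sX]] _] := gX.
have [_ [pY sY]] := aY.
rewrite !KL_split //.
have h1 := good_lin gX aY.
have h2 := good_lin gX gX.1.
rewrite -h2 in h1.
move: h1.
under eq_bigr => j _ do rewrite mulrBr.
under [X in _ = X -> _]eq_bigr => j _ do rewrite mulrBr.
rewrite !sumrB => h1.
lra.
Qed.

Lemma good_iproj X : good X -> is_Iproj (affL P) Q X.
Proof.
move=> gX; split; first exact: gX.1.
move=> Y aY; rewrite (pythag gX aY) lerDr.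
have [_ [pX sX]] := gX.1; have [_ [pY sY]] := aY.
exact: KL_ge0.
Qed.

Lemma good_uniq X Z : good X -> is_Iproj (affL P) Q Z -> Z = X.
Proof.
move=> gX [aZ hZ].
have := hZ X gX.1; rewrite (pythag gX aZ) => h.
apply: gibbs; [exact: aZ.2 | exact: gX.1.2 | lra].
Qed.

Hypothesis hQeq : forall i,
  \sum_j (P i j - P ord0 j) * ln (Q j) = entropy (P ord0) - entropy (P i).

Lemma split_lin X i : \sum_j (P i j - P ord0 j) * (ln (X j) - ln (Q j)) =
  \sum_j P i j * ln (X j) - \sum_j P ord0 j * ln (X j) -
  (\sum_j P i j * ln (Q j) - \sum_j P ord0 j * ln (Q j)).
Proof. by rewrite -!sumrB; apply: eq_bigr => j _; ring. Qed.

Lemma split_Q i : \sum_j (P i j - P ord0 j) * ln (Q j) =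
  \sum_j P i j * ln (Q j) - \sum_j P ord0 j * ln (Q j).
Proof. by rewrite -!sumrB; apply: eq_bigr => j _; ring. Qed.

Lemma eqdiv_good X : affL P X ->
  (forall i, KL (P i) X = KL (P ord0) X) -> good X.
Proof.
move=> aX he; split => // i.
have [_ [pX _]] := aX.
have := he i; rewrite !KL_split //; try by case: (hP i). 2: by case: (hP ord0).
move: (hQeq i); rewrite /entropy split_lin split_Q; lra.
Qed.

Lemma good_eqdiv X : good X -> forall i, KL (P i) X = KL (P ord0) X.
Proof.
move=> [aX gX] i.
have [_ [pX _]] := aX.
rewrite !KL_split //; try by case: (hP i). 2: by case: (hP ord0).
move: (hQeq i) (gX i); rewrite /entropy split_lin split_Q; lra.
Qed.

End Main.


Section D2.
Variable R : realType.

Lemma deriv_lin (u b t : R) : is_derive t 1 (fun s : R => u + s * b) b.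
Proof.
have -> : (fun s : R => u + s * b) = cst u + b \*: id.
  by apply: funext => s /=; rewrite mulrC.
apply: is_derive_eq.
by rewrite add0r [_%:A]mulr1.
Qed.

Lemma deriv_term (q p u b t : R) :
  is_derive t 1 (fun s : R => q * expR (u + s * b) - p * (u + s * b))
    (q * expR (u + t * b) * b - p * b).
Proof.
have -> : (fun s : R => q * expR (u + s * b) - p * (u + s * b)) =
  q \*: (expR \o (fun s => u + s * b)) - p \*: (fun s => u + s * b).
  by apply: funext.
apply: is_derive_eq.
by rewrite scaler0 !add0r !mul1r [_%:A]mulr1 /GRing.scale /= mulrA.
Qed.

Lemma derive_unique (f : R -> R) (t d1 d2 : R) :
  is_derive t 1 f d1 -> is_derive t 1 f d2 -> d1 = d2.
Proof. by move=> h1 h2; rewrite -(@derive_val _ _ _ _ _ _ _ h1) (@derive_val _ _ _ _ _ _ _ h2). Qed.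

Section C.
Variable T : topologicalType.
Lemma contM (f g : T -> R) : continuous f -> continuous g -> continuous (fun x => f x * g x).
Proof. by move=> hf hg x; apply: continuousM; [exact: hf|exact: hg]. Qed.
Lemma contB (f g : T -> R) : continuous f -> continuous g -> continuous (fun x => f x - g x).
Proof. by move=> hf hg x; apply: continuousB; [exact: hf|exact: hg]. Qed.
Lemma contD (f g : T -> R) : continuous f -> continuous g -> continuous (fun x => f x + g x).
Proof. by move=> hf hg x; apply: continuousD; [exact: hf|exact: hg]. Qed.
Lemma contE (f : T -> R) : continuous f -> continuous (fun x => expR (f x)).
Proof. by move=> hf x; apply: continuous_comp (hf x) (@continuous_expR R _). Qed.
Lemma cont_sum k (f : 'I_k -> T -> R) : (forall i, continuous (f i)) ->
  continuous (fun x => \sum_i f i x).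
Proof.
elim: k f => [|k IH] f hf.
  have -> : (fun x => \sum_(i < 0) f i x) = fun=> 0.
    by apply: funext => x; rewrite big_ord0.
  exact: cst_continuous.
have -> : (fun x => \sum_(i < k.+1) f i x) =
  fun x => \sum_(i < k) f (widen_ord (leqnSn k) i) x + f ord_max x.
  by apply: funext => x; rewrite big_ord_recr.
apply: contD; last exact: hf.
exact: IH.
Qed.
End C.

Lemma cont_G r N (B : 'M[R]_(r, N)) (Q p : 'I_N -> R) :
  continuous (fun v : 'rV[R]_r => \sum_j (Q j * expR ((v *m B) ord0 j) - p j * (v *m B) ord0 j)).
Proof.
have hu : forall j, continuous (fun v : 'rV[R]_r => (v *m B) ord0 j).
  move=> j.
  have -> : (fun v : 'rV[R]_r => (v *m B) ord0 j) =
    fun v => \sum_k v ord0 k * B k j by apply: funext => v; rewrite mxE.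
  apply: cont_sum => k; apply: contM; first exact: coord_continuous.
  exact: cst_continuous.
apply: cont_sum => j; apply: contB; apply: contM; try exact: cst_continuous.
  exact: contE.
exact: hu.
Qed.

Lemma hbound (q p t : R) : 0 < q -> 0 < p ->
  p * `|t| - 2 * p * `|1 - ln (2 * p / q)| <= q * expR t - p * t.
Proof.
move=> q0 p0.
set a := ln (2 * p / q).
have ea : q * expR a = 2 * p.
  rewrite /a lnK ?posrE ?divr_gt0 ?mulr_gt0 //; field; exact: lt0r_neq0.
have n1 : - `|1 - a| <= 1 - a by rewrite lerNnormlW.
have n0 : 0 <= `|1 - a| by [].
case: (leP 0 t) => ht.
- rewrite ger0_norm //.
  have e : expR t = expR a * expR (t - a) by rewrite -expRD addrC subrK.
  have h1 := expR_ge1Dx (t - a).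
  have h2 : q * expR t >= 2 * p * (1 + (t - a)).
    by rewrite e mulrA ea ler_pM2l ?mulr_gt0.
  nra.
- rewrite ltr0_norm //.
  have := expR_gt0 t => h; nra.
Qed.
End D2.


Lemma le_sum_term (R : realType) k (F : 'I_k -> R) j :
  (forall i, 0 <= F i) -> F j <= \sum_i F i.
Proof.
move=> h; rewrite (bigD1 j) //= lerDl; apply: sumr_ge0 => i _; exact: h.
Qed.

Lemma unlift_lift0 m (i : 'I_m) : unlift (@ord0 m) (lift ord0 i) = Some i.
Proof. exact: liftK. Qed.

Section Exist.
Variables (R : realType) (N m : nat) (P : 'I_m.+1 -> 'I_N -> R) (Q : 'I_N -> R).
Hypothesis hQ : forall j, 0 < Q j.
Hypothesis hP : forall i, simplex (P i).

Let p := P ord0.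
Let pp : forall j, 0 < p j. Proof. by case: (hP ord0). Qed.
Let A : 'M[R]_(m, N) := \matrix_(i, j) (P (lift ord0 i) j - p j).
Let C := cokermx A.
Let B := row_base (C^T).
Let r := \rank (C^T).
Let Pi := pinvmx B.

Let G (v : 'rV[R]_r) :=
  \sum_j (Q j * expR ((v *m B) ord0 j) - p j * (v *m B) ord0 j).

Let d j := 2 * p j * `|1 - ln (2 * p j / Q j)|.
Let S0 := \sum_j Q j.
Let M := \sum_j (S0 + \sum_k d k) / p j.

Let G0 : G 0 = S0.
Proof. by rewrite /G /S0; apply: eq_bigr => j _; rewrite mul0mx mxE expR0 mulr1 mulr0 subr0. Qed.

Let S0D : 0 <= S0 + \sum_k d k.
Proof.
apply: addr_ge0; first by apply: sumr_ge0 => j _; exact: ltW.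
apply: sumr_ge0 => k _; rewrite /d mulr_ge0 // mulr_ge0 //; exact: ltW.
Qed.

Lemma G_bound v : G v <= G 0 -> forall j, `|(v *m B) ord0 j| <= M.
Proof.
rewrite G0 => hv j.
set u := v *m B.
have h1 : \sum_k (p k * `|u ord0 k| - d k) <= G v.
  by apply: ler_sum => k _; apply: hbound.
rewrite sumrB in h1.
have h2 : p j * `|u ord0 j| <= S0 + \sum_k d k.
  apply: le_trans (_ : \sum_k p k * `|u ord0 k| <= _).
    by apply: (@le_sum_term _ _ (fun k => p k * `|u ord0 k|) j) => k; rewrite mulr_ge0 // ltW.
  lra.
apply: le_trans (_ : (S0 + \sum_k d k) / p j <= _).
  by rewrite ler_pdivlMr // mulrC.
apply: (@le_sum_term _ _ (fun k => (S0 + \sum_k d k) / p k) j) => k.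
by rewrite divr_ge0 // ltW.
Qed.

Let vK (v : 'rV[R]_r) : (v *m B) *m Pi = v.
Proof.
apply: (row_free_inj (row_base_free (C^T))).
by rewrite /= mulmxKpV // submxMl.
Qed.

Let Rad := M * \sum_i \sum_j `|Pi j i| + 1.

Lemma v_bound v : G v <= G 0 -> forall i, `|v ord0 i| <= Rad - 1.
Proof.
move=> hv i; rewrite /Rad addrK.
rewrite -{1}(vK v) mxE.
apply: le_trans (ler_norm_sum _ _ _) _.
apply: le_trans (_ : \sum_j M * `|Pi j i| <= _).
  apply: ler_sum => j _; rewrite normrM ler_wpM2r //.
  exact: G_bound.
rewrite -mulr_sumr ler_wpM2l //.
  by apply: sumr_ge0 => j _; rewrite divr_ge0 // ltW.
by apply: (@le_sum_term _ _ (fun i => \sum_j `|Pi j i|) i) => k; apply: sumr_ge0.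
Qed.


Let Rad_ge1 : 1 <= Rad.
Proof.
rewrite /Rad lerDr mulr_ge0 //.
  by apply: sumr_ge0 => j _; rewrite divr_ge0 // ltW.
by apply: sumr_ge0 => i _; apply: sumr_ge0.
Qed.

Lemma exists_min : exists c : 'rV[R]_r, (forall i, `|c ord0 i| <= Rad - 1) /\
  forall v : 'rV[R]_r, (forall i, `|v ord0 i| <= Rad) -> G c <= G v.
Proof.
pose K := [set v : 'rV[R]_r | forall i, (`[- Rad, Rad]%classic : set R) (v ord0 i)]%classic.
have Kin : forall v, K v <-> forall i, `|v ord0 i| <= Rad.
  move=> v; rewrite /K /=; split => h i.
    by move: (h i); rewrite /= in_itv /= -ler_norml.
  by rewrite /= in_itv /= -ler_norml; exact: h.
have cK : compact K.
  exact: (@rV_compact _ _ (fun=> `[- Rad, Rad]%classic) (fun=> @segment_compact R _ _)).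
have K0 : (K !=set0)%classic.
  exists 0; apply/Kin => i; rewrite mxE normr0; have := Rad_ge1; lra.
have [c cK' hc] := @EVT_min_rV R r G K K0 cK (continuous_subspaceT (@cont_G R r N B Q p)).
have cK2 : forall i, `|c ord0 i| <= Rad by apply/Kin; rewrite -in_setE.
have Gc0 : G c <= G 0.
  apply: hc; rewrite in_setE; apply/Kin => i; rewrite mxE normr0; have := Rad_ge1; lra.
exists c; split; first exact: v_bound.
by move=> v hv; apply: hc; rewrite in_setE; apply/Kin.
Qed.

Lemma crit (c : 'rV[R]_r) (i : 'I_r) : (forall k, `|c ord0 k| <= Rad - 1) ->
  (forall v : 'rV[R]_r, (forall k, `|v ord0 k| <= Rad) -> G c <= G v) ->
  \sum_j (Q j * expR ((c *m B) ord0 j) * B i j - p j * B i j) = 0.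
Proof.
move=> cb cmin.
set u := c *m B.
pose h := fun (j : 'I_N) (t : R) => Q j * expR (u ord0 j + t * B i j) - p j * (u ord0 j + t * B i j).
pose phi := fun t : R => \sum_j h j t.
have hphi : forall t, phi t = G (c + t *: delta_mx ord0 i).
  move=> t; rewrite /phi /G; apply: eq_bigr => j _.
  by rewrite /h mulmxDl -scalemxAl -rowE !mxE.
have der : forall t : R, is_derive t 1 phi
    (\sum_j (Q j * expR (u ord0 j + t * B i j) * B i j - p j * B i j)).
  move=> t; have -> : phi = \sum_j h j by rewrite fct_sumE.
  by apply: is_derive_sum => j; exact: deriv_term.
have d0 : is_derive (0 : R) 1 phi 0.
  apply: (@derive1_at_min R phi (-1) 1 0).
  - lra.
  - by move=> t _; exact: (@ex_derive _ _ _ _ _ _ _ (der t)).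
  - by rewrite in_itv /=; apply/andP; split; lra.
  move=> t; rewrite in_itv /= => /andP [t1 t2].
  rewrite !hphi scale0r addr0; apply: cmin => k.
  rewrite !mxE; apply: le_trans (ler_normD _ _) _.
  have hb : `|t * ((ord0 == ord0 :> 'I_1) && (k == i))%:R| <= 1.
    rewrite eqxx /=; case: (k == i) => /=.
      by rewrite mulr1 ler_norml; apply/andP; split; lra.
    by rewrite mulr0 normr0 ler01.
  have := cb k; lra.
have := derive_unique d0 (der 0).
move=> e; rewrite [RHS]e; apply: eq_bigr => j _; by rewrite mul0r addr0.
Qed.

Lemma exists_good0 : exists X : 'I_N -> R, affL P X /\
  forall i, \sum_j (P i j - P ord0 j) * (ln (X j) - ln (Q j)) = 0.
Proof.
have [c [cb cmin]] := exists_min.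
set u := c *m B.
pose q := fun j => Q j * expR (u ord0 j).
have qpos : forall j, 0 < q j by move=> j; rewrite mulr_gt0 // expR_gt0.
have hx : \row_j (q j - p j) *m B^T = 0.
  apply/rowP => i; rewrite !mxE -[RHS](@crit c i cb cmin).
  by apply: eq_bigr => j _; rewrite [(\row_j0 _) _ _]mxE [B^T _ _]mxE /q mulrBl.
have hC : \row_j (q j - p j) *m C = 0.
  have sCB : (C^T <= B)%MS by rewrite /B eq_row_base.
  case/submxP: sCB => D hD.
  by rewrite -(trmxK C) hD trmx_mul mulmxA hx mul0mx.
have sx : (\row_j (q j - p j) <= A)%MS by rewrite submxE hC.
case/submxP: sx => cc hcc.
have hA : A *m u^T = 0.
  have sBC : (B <= C^T)%MS by rewrite /B eq_row_base.
  case/submxP: sBC => E hE.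
  by rewrite /u hE mulmxA trmx_mul trmxK mulmxA mulmx_coker mul0mx.
pose lam := fun k : 'I_m.+1 =>
  if unlift ord0 k is Some i then cc ord0 i else 1 - \sum_i cc ord0 i.
have lamS : \sum_k lam k = 1.
  rewrite big_ord_recl /lam unlift_none.
  rewrite [X in _ + X](eq_bigr (fun i => cc ord0 i)) => [|i _]; last by rewrite unlift_lift0.
  by rewrite subrK.
have qj : forall j, q j = \sum_k lam k * P k j.
  move=> j; have := congr1 (fun M0 : 'rV[R]_N => M0 ord0 j) hcc.
  rewrite [in X in X -> _]mxE [in X in _ = X -> _]mxE => e.
  rewrite big_ord_recl /lam unlift_none.
  rewrite [X in _ + X](eq_bigr (fun i => cc ord0 i * P (lift ord0 i) j)) => [|i _]; last by rewrite unlift_lift0.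
  have e2 : \sum_i cc ord0 i * A i j =
    \sum_i cc ord0 i * P (lift ord0 i) j - (\sum_i cc ord0 i) * P ord0 j.
    rewrite mulr_suml -sumrB; apply: eq_bigr => i _; rewrite mxE /p; ring.
  rewrite e2 /p in e.
  rewrite mulrBl mul1r; lra.
exists q; split.
  split; first by exists lam; split.
  split => //.
  under eq_bigr do rewrite qj.
  rewrite exchange_big /= -[RHS]lamS; apply: eq_bigr => k _.
  by rewrite -mulr_sumr; case: (hP k) => _ ->; rewrite mulr1.
move=> i; case: (unliftP ord0 i) => [i'|] ->.
  have := congr1 (fun M0 : 'M[R]_(m, 1) => M0 i' ord0) hA.
  rewrite [in X in X -> _]mxE [in X in _ = X -> _]mxE => e; rewrite -[RHS]e.
  apply: eq_bigr => j _; rewrite [A _ _]mxE [u^T _ _]mxE /q lnM ?posrE ?expR_gt0 // expRK.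
  by rewrite addrAC subrr add0r.
by apply: big1 => j _; rewrite subrr mul0r.
Qed.

End Exist.

Section Final.
Variables (R : realType) (m n : nat) (P : 'I_m.+1 -> 'I_n.+1 -> R).
Variable theta : 'cV[R]_n.

Let tt (k : 'I_n.+1) : R := if unlift ord0 k is Some j then theta j ord0 else 0.

Lemma Q1_gt0 : 0 < Q1theta theta.
Proof.
rewrite /Q1theta invr_gt0.
have : 0 <= \sum_(j < n) expR (theta j ord0) by apply: sumr_ge0 => j _; exact: expR_ge0.
lra.
Qed.

Lemma Qtheta_E k : Qtheta theta k = Q1theta theta * expR (tt k).
Proof.
rewrite /Qtheta /tt; case: (unliftP ord0 k) => [j|] _ //.
by rewrite expR0 mulr1.
Qed.

Lemma Qtheta_gt0 k : 0 < Qtheta theta k.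
Proof. by rewrite Qtheta_E mulr_gt0 ?Q1_gt0 ?expR_gt0. Qed.

Lemma lnQ k : ln (Qtheta theta k) = ln (Q1theta theta) + tt k.
Proof. by rewrite Qtheta_E lnM ?posrE ?Q1_gt0 ?expR_gt0 // expRK. Qed.

Lemma hQeq_theta (hP : forall i, simplex (P i)) (htheta : Psi' P *m theta = bvec P) i :
  \sum_j (P i j - P ord0 j) * ln (Qtheta theta j) = entropy (P ord0) - entropy (P i).
Proof.
case: (unliftP ord0 i) => [i'|] ->; last first.
  by rewrite subrr; apply: big1 => j _; rewrite subrr mul0r.
under eq_bigr do rewrite lnQ mulrDr.
rewrite big_split /= -mulr_suml sumrB.
case: (hP (lift ord0 i')) => _ ->; case: (hP ord0) => _ ->.
rewrite subrr mul0r add0r.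
have := congr1 (fun M0 : 'cV[R]_m => M0 i' ord0) htheta.
rewrite [in X in X -> _]mxE [in X in _ = X -> _]mxE => <-.
rewrite big_ord_recl /tt unlift_none mulr0 add0r.
apply: eq_bigr => j _; rewrite unlift_lift0 mxE.
by rewrite mulrC.
Qed.

End Final.

Theorem lemma19 (R : realType) (m n : nat)
  (P : 'I_m.+1 -> 'I_n.+1 -> R)
  (hP : forall i, simplex (P i))
  (hgp : general_position P)
  (theta : 'cV[R]_n)
  (htheta : Psi' P *m theta = bvec P) :
  (exists Q0, is_Iproj (affL P) (Qtheta theta) Q0) /\
  (forall Q0, is_Iproj (affL P) (Qtheta theta) Q0 ->
     [/\ affL P Q0,
         (forall i, KL (P i) Q0 = KL (P ord0) Q0) &
         (forall Q2, affL P Q2 ->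
            (forall i, KL (P i) Q2 = KL (P ord0) Q2) -> Q2 = Q0)]).
Proof.
have hQ := @Qtheta_gt0 R n theta.
have hQeq := hQeq_theta hP htheta.
have [X gX] := exists_good0 hQ hP.
have gX' : good P (Qtheta theta) X by exact: gX.
have iX := good_iproj hQ gX'.
split; first by exists X.
move=> Q0 hQ0.
have e := good_uniq hQ gX' hQ0; subst Q0.
split; first exact: gX'.1.
  move=> i; have := good_eqdiv hP hQeq gX' i. exact.
move=> Q2 aQ2 eq2.
have g2 := eqdiv_good hP hQeq aQ2 eq2.
by have := good_uniq hQ g2 iX.
Qed.
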